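(* Let $\mathcal{F}$ satisfy the standard conditions and be closed under the minimizer operation. Let $\alpha_0\neq0,\alpha_1,\dots,\alpha_k\in\mathbb{R}_{\mathcal{F}}$. Then every real root of $P(X)=\alpha_0X^k+\alpha_1X^{k-1}+\cdots+\alpha_{k-1}X+\alpha_k$ belongs to $\mathbb{R}_{\mathcal{F}}$.
   Context: $\mathbb{N}=\{0,1,2,\dots\}$. $\mathcal{F}$ is a set of functions $\mathbb{N}^n\to\mathbb{N}$; it satisfies the standard conditions if it contains the zero function, the successor, all projections $P^n_i$, addition, multiplication and modified subtraction $x\dot- y=\max(x-y,0)$, and is closed under composition. For $f:\mathbb{N}^{k+1}\to\mathbb{N}$ the minimizer $\mu f:\mathbb{N}^{k+1}\to\mathbb{N}$ is $\mu f(x_1,\dots,x_k,x_{k+1})=\min\{j: f(x_1,\dots,x_k,j)=0\ \text{or}\ j=x_{k+1}\}$; $\mathcal{F}$ is closed under the minimizer operation if $f\in\mathcal{F}\Rightarrow\mu f\in\mathcal{F}$. An $\mathcal{F}$-sequence is $A:\mathbb{N}\to\mathbb{Q}$, $A(x)=\frac{f(x)-g(x)}{h(x)+1}$ with $f,g,h\in\mathcal{F}$. $\alpha\in\mathbb{R}$ is $\mathcal{F}$-computable if some $\mathcal{F}$-sequence $A$ satisfies $|A(x)-\alpha|\le\frac1{x+1}$ for all $x$; $\mathbb{R}_{\mathcal{F}}$ is the set of $\mathcal{F}$-computable reals. *)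

(* Defs.v *)
From mathcomp Require Import all_boot.
From Stdlib Require Import Reals.

Set Implicit Arguments.
Unset Strict Implicit.
Unset Printing Implicit Defensive.

Definition nfun (n : nat) := ('I_n -> nat) -> nat.

Definition FunClass := forall n : nat, nfun n -> Prop.

Definition arg0 : 'I_2 := @Ordinal 2 0 isT.
Definition arg1 : 'I_2 := @Ordinal 2 1 isT.

Definition zero_fun : nfun 1 := fun _ => 0.
Definition succ_fun : nfun 1 := fun x => (x ord0).+1.
Definition proj_fun (n : nat) (i : 'I_n) : nfun n := fun x => x i.
Definition add_fun : nfun 2 := fun x => x arg0 + x arg1.
Definition mul_fun : nfun 2 := fun x => x arg0 * x arg1.
(* modified subtraction x -. y = max(x - y, 0) = truncated subtraction on nat *)
Definition msub_fun : nfun 2 := fun x => x arg0 - x arg1.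

Definition compose (m n : nat) (f : nfun m) (g : 'I_m -> nfun n) : nfun n :=
  fun x => f (fun i => g i x).

Definition standard_conditions (F : FunClass) : Prop :=
  F 1 zero_fun /\ F 1 succ_fun /\
      (forall n (i : 'I_n), F n (proj_fun i)) /\
      F 2 add_fun /\ F 2 mul_fun /\ F 2 msub_fun /\
      (forall m n (f : nfun m) (g : 'I_m -> nfun n),
          F m f -> (forall i, F n (g i)) -> F n (compose f g)).

Definition upd_last (k : nat) (x : 'I_k.+1 -> nat) (j : nat) : 'I_k.+1 -> nat :=
  fun i => if i == ord_max then j else x i.

(* mu f (x_1..x_k, x_{k+1}) = min { j : f(x_1..x_k, j) = 0 or j = x_{k+1} }.
   The least such j lies in [0, x_{k+1}], so it is the first index in
   iota 0 (x_{k+1}+1) satisfying the condition. *)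
Definition minimizer (k : nat) (f : nfun k.+1) : nfun k.+1 :=
  fun x => find (fun j => (f (upd_last x j) == 0) || (j == x ord_max))
                (iota 0 (x ord_max).+1).

Definition closed_under_minimizer (F : FunClass) : Prop :=
  forall k (f : nfun k.+1), F k.+1 f -> F k.+1 (minimizer f).

Definition app1 (f : nfun 1) (x : nat) : nat := f (fun _ => x).

Definition Fseq (f g h : nfun 1) (x : nat) : R :=
  ((INR (app1 f x) - INR (app1 g x)) / (INR (app1 h x) + 1))%R.

Definition F_computable (F : FunClass) (a : R) : Prop :=
  exists f g h : nfun 1, [/\ F 1 f, F 1 g, F 1 h &
    forall x : nat, (Rabs (Fseq f g h x - a) <= 1 / (INR x + 1))%R].

(* Main.v *)
Require Import Defs.
From mathcomp Require Import all_boot.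
From Stdlib Require Import Reals Lra Lia FunctionalExtensionality ZArith IndefiniteDescription.
From mathcomp Require Import zify.
Set Implicit Arguments.
Unset Strict Implicit.

Definition F1 (F : FunClass) (u : nat -> nat) := F 1 (fun v => u (v ord0)).
Definition F2 (F : FunClass) (f : nat -> nat -> nat) :=
  F 2 (fun v => f (v arg0) (v arg1)).
Definition pair2 n (f g : nfun n) : 'I_2 -> nfun n :=
  fun i => if val i == 0 then f else g.

Lemma pair2_F F n f g : F n f -> F n g -> forall i, F n (@pair2 n f g i).
Proof. by move=> Hf Hg i; rewrite /pair2; case: (val i == 0). Qed.

Lemma F1_const F : standard_conditions F -> forall c, F1 F (fun _ => c).
Proof.
case=> [Hz [Hs [Hp [Ha [Hm [Hsub Hc]]]]]]; elim=> [|c IH]; first exact Hz.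
exact (Hc 1 1 succ_fun (fun _ => fun v => c) Hs (fun _ => IH)).
Qed.

Lemma F1_id F : standard_conditions F -> F1 F (fun n => n).
Proof. case=> [Hz [Hs [Hp _]]]; exact: (Hp 1 ord0). Qed.

Lemma F2_p0 F : standard_conditions F -> F2 F (fun n j => n).
Proof. case=> [Hz [Hs [Hp _]]]; exact: (Hp 2 arg0). Qed.
Lemma F2_p1 F : standard_conditions F -> F2 F (fun n j => j).
Proof. case=> [Hz [Hs [Hp _]]]; exact: (Hp 2 arg1). Qed.

Lemma F2_bin F h f g : standard_conditions F -> F2 F h -> F2 F f -> F2 F g ->
  F2 F (fun n j => h (f n j) (g n j)).
Proof.
case=> [Hz [Hs [Hp [Ha [Hm [Hsub Hc]]]]]] Hh Hf Hg.
exact (Hc 2 2 _ (pair2 (fun v => f (v arg0) (v arg1)) (fun v => g (v arg0) (v arg1))) Hh (pair2_F Hf Hg)).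
Qed.

Lemma F1_bin F h f g : standard_conditions F -> F2 F h -> F1 F f -> F1 F g ->
  F1 F (fun n => h (f n) (g n)).
Proof.
case=> [Hz [Hs [Hp [Ha [Hm [Hsub Hc]]]]]] Hh Hf Hg.
exact (Hc 2 1 _ (pair2 (fun v => f (v ord0)) (fun v => g (v ord0))) Hh (pair2_F Hf Hg)).
Qed.

Lemma F2_un F u f : standard_conditions F -> F1 F u -> F2 F f ->
  F2 F (fun n j => u (f n j)).
Proof.
case=> [Hz [Hs [Hp [Ha [Hm [Hsub Hc]]]]]] Hu Hf.
exact (Hc 1 2 _ (fun _ => (fun v => f (v arg0) (v arg1))) Hu (fun _ => Hf)).
Qed.

Lemma F2_const F c : standard_conditions F -> F2 F (fun _ _ => c).
Proof. move=> HF; exact: (F2_un (u := fun _ => c) HF (F1_const HF c) (F2_p0 HF)). Qed.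

Lemma F2_add F f g : standard_conditions F -> F2 F f -> F2 F g ->
  F2 F (fun n j => f n j + g n j).
Proof. move=> HF; apply: (F2_bin (h := addn) HF); by case: HF => [? [? [? [? _]]]]. Qed.
Lemma F2_mul F f g : standard_conditions F -> F2 F f -> F2 F g ->
  F2 F (fun n j => f n j * g n j).
Proof. move=> HF; apply: (F2_bin (h := muln) HF); by case: HF => [? [? [? [? [? _]]]]]. Qed.
Lemma F2_sub F f g : standard_conditions F -> F2 F f -> F2 F g ->
  F2 F (fun n j => f n j - g n j).
Proof. move=> HF; apply: (F2_bin (h := subn) HF); by case: HF => [? [? [? [? [? [? _]]]]]]. Qed.

Definition mu2 (f : nat -> nat -> nat) n B :=
  find (fun j => (f n j == 0) || (j == B)) (iota 0 B.+1).

Lemma F2_mu F f : closed_under_minimizer F -> F2 F f -> F2 F (mu2 f).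
Proof.
move=> HM Hf; have := HM 1 _ Hf.
have -> : minimizer (fun v : 'I_2 -> nat => f (v arg0) (v arg1)) =
          (fun v => mu2 f (v arg0) (v arg1)); last by [].
apply: functional_extensionality => v.
rewrite /minimizer /mu2 /upd_last.
have -> : (ord_max : 'I_2) = arg1 by apply/val_inj.
by rewrite eqxx.
Qed.

Lemma mu2_spec f n B :
  [/\ mu2 f n B <= B, (f n (mu2 f n B) == 0) || (mu2 f n B == B) &
      forall j, j < mu2 f n B -> f n j != 0].
Proof.
set a := (fun j => (f n j == 0) || (j == B)).
have Hs : has a (iota 0 B.+1).
  by apply/hasP; exists B; [rewrite mem_iota; lia | rewrite /a eqxx orbT].
have Hlt : mu2 f n B < B.+1.
  by have := Hs; rewrite has_find size_iota.
split; first lia.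
- have := nth_find 0 Hs; rewrite nth_iota //.
- move=> j Hj; have := before_find 0 Hj; rewrite nth_iota; last lia.
  by rewrite /a add0n; case/norP.
Qed.

Definition RG2 F (r : nat -> nat -> R) := exists p m d,
  [/\ F2 F p, F2 F m, F2 F d &
   forall n j, r n j = ((INR (p n j) - INR (m n j)) / (INR (d n j) + 1))%R].

Lemma INR_p1 (d : nat) : (INR d + 1 > 0)%R.
Proof. have := pos_INR d; lra. Qed.

Lemma RG2_ext F r r' : RG2 F r -> (forall n j, r n j = r' n j) -> RG2 F r'.
Proof.
case=> p [m [d [Hp Hm Hd E]]] E'; exists p, m, d; split=> // n j.
by rewrite -E'.
Qed.

Lemma RG2_const F (p m d : nat) : standard_conditions F ->
  RG2 F (fun _ _ => ((INR p - INR m) / (INR d + 1))%R).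
Proof.
move=> HF; exists (fun _ _ => p), (fun _ _ => m), (fun _ _ => d).
by split; try apply: F2_const.
Qed.

Lemma RG2_frac F P D : standard_conditions F -> F2 F P -> F2 F D ->
  RG2 F (fun n j => (INR (P n j) / (INR (D n j) + 1))%R).
Proof.
move=> HF HP HD; exists P, (fun _ _ => 0), D; split => //; first exact: F2_const.
by move=> n j /=; rewrite Rminus_0_r.
Qed.

Lemma RG2_add F r1 r2 : standard_conditions F -> RG2 F r1 -> RG2 F r2 ->
  RG2 F (fun n j => r1 n j + r2 n j)%R.
Proof.
move=> HF [p1 [m1 [d1 [Hp1 Hm1 Hd1 E1]]]] [p2 [m2 [d2 [Hp2 Hm2 Hd2 E2]]]].
have Hc1 := F2_const 1 HF.
exists (fun n j => p1 n j * (d2 n j + 1) + p2 n j * (d1 n j + 1)),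
       (fun n j => m1 n j * (d2 n j + 1) + m2 n j * (d1 n j + 1)),
       (fun n j => d1 n j * d2 n j + d1 n j + d2 n j).
split.
- by apply: F2_add => //; apply: F2_mul => //; apply: F2_add.
- by apply: F2_add => //; apply: F2_mul => //; apply: F2_add.
- by apply: F2_add => //; apply: F2_add => //; apply: F2_mul.
move=> n j; rewrite E1 E2 !plus_INR !mult_INR !plus_INR /=.
have := INR_p1 (d1 n j); have := INR_p1 (d2 n j).
have := pos_INR (d1 n j); have := pos_INR (d2 n j).
move=> *; field; split; nra.
Qed.

Lemma RG2_mul F r1 r2 : standard_conditions F -> RG2 F r1 -> RG2 F r2 ->
  RG2 F (fun n j => r1 n j * r2 n j)%R.
Proof.
move=> HF [p1 [m1 [d1 [Hp1 Hm1 Hd1 E1]]]] [p2 [m2 [d2 [Hp2 Hm2 Hd2 E2]]]].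
exists (fun n j => p1 n j * p2 n j + m1 n j * m2 n j),
       (fun n j => p1 n j * m2 n j + m1 n j * p2 n j),
       (fun n j => d1 n j * d2 n j + d1 n j + d2 n j).
split.
- by apply: F2_add => //; apply: F2_mul.
- by apply: F2_add => //; apply: F2_mul.
- by apply: F2_add => //; apply: F2_add => //; apply: F2_mul.
move=> n j; rewrite E1 E2 !plus_INR !mult_INR.
have := INR_p1 (d1 n j); have := INR_p1 (d2 n j).
have := pos_INR (d1 n j); have := pos_INR (d2 n j).
move=> *; field; split; nra.
Qed.

Lemma RG2_pow F r e : standard_conditions F -> RG2 F r ->
  RG2 F (fun n j => r n j ^ e)%R.
Proof.
move=> HF Hr; elim: e => [|e IH].
  apply: RG2_ext (RG2_const 1 0 0 HF) _ => n j /=; field.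
apply: RG2_ext (RG2_mul HF Hr IH) _ => n j //.
Qed.

Lemma RG2_sum F (r : nat -> nat -> nat -> R) K : standard_conditions F ->
  (forall i, (i <= K)%nat -> RG2 F (r i)) ->
  RG2 F (fun n j => sum_f_R0 (fun i => r i n j) K).
Proof.
move=> HF; elim: K => [|K IH] H; first exact: H.
apply: RG2_ext (RG2_add HF (IH _) (H K.+1 _)) _ => //.
by move=> i Hi; apply: H; lia.
Qed.

Definition F1seq F (s : nat -> R) := exists f g h,
  [/\ F1 F f, F1 F g, F1 F h &
   forall n, s n = ((INR (f n) - INR (g n)) / (INR (h n) + 1))%R].

Lemma RG2_seq F s iota : standard_conditions F -> F1seq F s -> F2 F iota ->
  RG2 F (fun n j => s (iota n j)).
Proof.
move=> HF [f [g [h [Hf Hg Hh E]]]] Hi.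
exists (fun n j => f (iota n j)), (fun n j => g (iota n j)), (fun n j => h (iota n j)).
by split; try apply: F2_un.
Qed.

Open Scope R_scope.

Definition Qr (alpha : nat -> R) (k r : nat) (t : R) :=
  sum_f_R0 (fun i => alpha i * INR ((k - i) ^_ r) * t ^ (k - i - r)) k.

Fixpoint Hp (x : R) (n : nat) (t : R) : R :=
  match n with O => 0 | S n => t ^ n + x * Hp x n t end.

Definition Sr (alpha : nat -> R) (k r : nat) (x t : R) :=
  sum_f_R0 (fun i => alpha i * INR ((k - i) ^_ r) * Hp x (k - i - r) t) k.

Lemma pow_diff x t n : t ^ n - x ^ n = (t - x) * Hp x n t.
Proof. elim: n => [|n IH] /=; first ring.
have -> : t * t ^ n - x * x ^ n = t ^ n * (t - x) + x * (t ^ n - x ^ n) by ring.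
rewrite IH; ring. Qed.

Lemma Hp_x x n : Hp x n.+1 x = INR n.+1 * x ^ n.
Proof. elim: n => [|n IH]; first by rewrite /=; ring.
change (x ^ n.+1 + x * Hp x n.+1 x = INR n.+2 * x ^ n.+1).
rewrite IH (S_INR n.+1) /=; ring. Qed.

Lemma Hp_cont x n t : continuity_pt (Hp x n) t.
Proof.
elim: n => [|n IH].
  by apply: continuity_pt_const => a b.
have E : Hp x n.+1 = ((fun y => y ^ n) + mult_real_fct x (Hp x n))%F.
  by apply: functional_extensionality => y.
rewrite E; apply: continuity_pt_plus.
  exact: derivable_continuous_pt (derivable_pt_pow n t).
exact: continuity_pt_scal.
Qed.

Lemma Sr_cont alpha k r x t : continuity_pt (Sr alpha k r x) t.
Proof.
apply: continuity_pt_finite_SF => i _.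
have E : (fun y => alpha i * INR ((k - i) ^_ r) * Hp x (k - i - r) y) =
   mult_real_fct (alpha i * INR ((k - i) ^_ r)) (Hp x (k - i - r)).
  by apply: functional_extensionality => y.
rewrite E; apply: continuity_pt_scal; exact: Hp_cont.
Qed.

Lemma Qr_diff alpha k r x t :
  Qr alpha k r t - Qr alpha k r x = (t - x) * Sr alpha k r x t.
Proof.
rewrite /Qr /Sr -minus_sum scal_sum; apply: sum_eq => i _.
have -> : alpha i * INR ((k - i) ^_ r) * t ^ (k - i - r) -
  alpha i * INR ((k - i) ^_ r) * x ^ (k - i - r) =
  alpha i * INR ((k - i) ^_ r) * (t ^ (k - i - r) - x ^ (k - i - r)) by ring.
rewrite pow_diff; ring.
Qed.

Lemma Sr_x alpha k r x : Sr alpha k r x x = Qr alpha k r.+1 x.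
Proof.
rewrite /Sr /Qr; apply: sum_eq => i _.
rewrite ffactnSr mult_INR.
case E: (k - i - r)%nat => [|m].
  rewrite /=; ring.
have -> : (k - i - r.+1)%nat = m by lia.
rewrite Hp_x; ring.
Qed.

Lemma last_true (P : nat -> Prop) k : P 0%nat -> ~ P k ->
  exists r, (r < k)%nat /\ P r /\ ~ P r.+1.
Proof.
elim: k => [|k IH] H0 Hk; first by [].
case: (Classical_Prop.classic (P k)) => Hk'.
  by exists k; split => //; lia.
have [r [Hr [Pr Pr1]]] := IH H0 Hk'; exists r; split => //; lia.
Qed.

Lemma sum_zero n : sum_f_R0 (fun _ => 0) n = 0.
Proof. elim: n => [|n IH] //=; rewrite IH; ring. Qed.

Lemma root_sep alpha k x : alpha 0%nat <> 0 ->
  sum_f_R0 (fun i => alpha i * x ^ (k - i)) k = 0 ->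
  exists (r : nat) (sg c dl : R) (S : R -> R),
    (sg = 1 \/ sg = -1) /\ 0 < c /\ 0 < dl <= 1 /\
    forall t, Rabs (t - x) <= dl -> sg * Qr alpha k r t = (t - x) * S t /\ c <= S t.
Proof.
move=> Ha0 Hroot.
have Hk : (0 < k)%nat.
  case: k Hroot => [|k] //=; rewrite /=; move=> H; exfalso; apply: Ha0; lra.
have Q0 : Qr alpha k 0 x = 0.
  rewrite -Hroot /Qr; apply: sum_eq => i _; rewrite ffactn0 subn0 /=; ring.
have Qk : Qr alpha k k x <> 0.
  rewrite /Qr decomp_sum; last by apply/ltP.
  rewrite (sum_eq _ (fun _ => 0)); last first.
    by move=> i _; rewrite ffact_small /=; [ring | lia].
  rewrite sum_zero subn0 ffactnn subnn /= Rmult_1_r Rplus_0_r.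
  apply: Rmult_integral_contrapositive; split => //.
  apply: not_0_INR; have := fact_gt0 k; lia.
have LT := @last_true (fun r => Qr alpha k r x = 0) k Q0 Qk.
case: LT => r [Hr [Qr0 Qr1]].
set S0 := Sr alpha k r x.
have S0x : S0 x <> 0 by rewrite /S0 Sr_x.
pose sg := if Rlt_dec 0 (S0 x) then 1 else -1.
have Hsg : sg = 1 \/ sg = -1 by rewrite /sg; case: (Rlt_dec 0 (S0 x)) => /=; auto.
have Hsgx : 0 < sg * S0 x.
  rewrite /sg; case: (Rlt_dec 0 (S0 x)) => H /=; first lra.
  have : S0 x < 0.
    case: (Rtotal_order (S0 x) 0) => [h|[h|h]]; [lra | exfalso; exact: S0x h | exfalso; exact: H h].
  lra.
set c := sg * S0 x / 2.
have Hc : c > 0 by rewrite /c; lra.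
have := Sr_cont alpha k r x x.
rewrite /continuity_pt /continue_in /limit1_in /limit_in => Hcont.
have [al [Hal Hx]] := Hcont c Hc.
exists r, sg, c, (Rmin (al / 2) 1), (fun t => sg * S0 t).
split => //; split => //; split.
  split; [apply: Rmin_glb_lt; lra | exact: Rmin_r].
move=> t Ht; split.
  have := Qr_diff alpha k r x t; rewrite Qr0 -/S0 => E.
  by rewrite Rminus_0_r in E; rewrite E; ring.
have Hd : Rabs (S0 t - S0 x) < c.
  case: (Req_dec t x) => [->|Htx].
    by rewrite Rminus_diag_eq // Rabs_R0.
  have := Hx t; rewrite /dist /= /R_dist; apply; split.
    by split => //; auto.
  have := Rmin_l (al / 2) 1; lra.
have Hc2 : sg * S0 t >= sg * S0 x - c.
  have := Rabs_def2 _ _ Hd; case: Hsg => ->; lra.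
rewrite /c in Hc2 *; lra.
Qed.

Lemma div_lower y c eta : 0 < c -> - eta <= y * c -> - (eta / c) <= y.
Proof.
move=> Hc H; apply: (Rmult_le_reg_r c) => //.
have -> : - (eta / c) * c = - eta by field; lra.
done.
Qed.

Lemma div_upper y c eta : 0 < c -> y * c <= eta -> y <= eta / c.
Proof.
move=> Hc H; apply: (Rmult_le_reg_r c) => //.
have -> : eta / c * c = eta by field; lra.
done.
Qed.

Lemma search_lemma (cond : nat -> nat -> nat) n N (x a h c eta : R)
  (Qv : nat -> R) (Qf S : R -> R) :
  0 < c -> 0 < h -> 0 <= eta -> a < x -> x < a + INR N * h ->
  (forall j, (j <= N)%nat -> Rabs (Qv j - Qf (a + INR j * h)) <= eta) ->
  (forall j, (j <= N)%nat -> Qf (a + INR j * h) = (a + INR j * h - x) * S (a + INR j * h)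
                          /\ c <= S (a + INR j * h)) ->
  (forall j, cond n j = 0%nat <-> 0 <= Qv j) ->
  Rabs (a + INR (mu2 cond n N) * h - x) <= eta / c + h.
Proof.
move=> Hc Hh He Hax HxN Happ HQ Hcond.
have [Hle Hor Hbef] := mu2_spec cond n N.
set js := mu2 cond n N in Hle Hor Hbef *.
have Hediv : 0 <= eta / c.
  by rewrite /Rdiv; apply: Rmult_le_pos => //; apply/Rlt_le/Rinv_0_lt_compat.
have Lo : - (eta / c) <= a + INR js * h - x.
  case/orP: Hor => [/eqP Hz | /eqP ->]; last lra.
  have Hq := proj1 (Hcond js) Hz.
  have [E Hs] := HQ js Hle.
  have Ha2 : Qv js - Qf (a + INR js * h) <= eta.
    have := Happ js Hle => H; have := Rle_abs (Qv js - Qf (a + INR js * h)); lra.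
  case: (Rle_lt_dec 0 (a + INR js * h - x)) => Hs0; first lra.
  apply: div_lower => //.
  rewrite E in Ha2; nra.
have Up : a + INR js * h - x <= eta / c + h.
  clear Hor Lo; clearbody js; move: Hle Hbef; case: js => [|j'] Hle Hbef.
    rewrite /=; lra.
  have Hj' : (j' <= N)%nat by lia.
  have Hnz : cond n j' <> 0%nat by apply/eqP; apply: Hbef.
  have Hq : Qv j' < 0.
    case: (Rlt_le_dec (Qv j') 0) => // H; exfalso; apply: Hnz; exact: (proj2 (Hcond j') H).
  have [E Hs] := HQ j' Hj'.
  have Ha2 : Qf (a + INR j' * h) - Qv j' <= eta.
    have := Happ j' Hj'; rewrite Rabs_minus_sym => H; have := Rle_abs (Qf (a + INR j' * h) - Qv j'); lra.
  have : a + INR j' * h - x <= eta / c.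
    case: (Rle_lt_dec (a + INR j' * h - x) 0) => Hs0; first lra.
    apply: div_upper => //.
    rewrite E in Ha2; nra.
  rewrite S_INR; lra.
apply: Rabs_le; lra.
Qed.

Lemma approx_bound (alpha : nat -> R) (s : nat -> nat -> R) k r (sg T Bt : R) m :
  (sg = 1 \/ sg = -1) -> Rabs T <= Bt ->
  (forall i, (i <= k)%nat -> Rabs (s i m - alpha i) <= 1 / (INR m + 1)) ->
  Rabs (sg * sum_f_R0 (fun i => s i m * INR ((k - i) ^_ r) * T ^ (k - i - r)) k
        - sg * Qr alpha k r T)
  <= sum_f_R0 (fun i => INR ((k - i) ^_ r) * Bt ^ (k - i - r)) k / (INR m + 1).
Proof.
move=> Hsg HT Hs.
rewrite -Rmult_minus_distr_l Rabs_mult.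
have -> : Rabs sg = 1 by case: Hsg => ->; rewrite ?Rabs_Ropp Rabs_R1.
rewrite Rmult_1_l /Qr -minus_sum.
apply: Rle_trans (sum_f_R0_triangle _ _) _.
rewrite /Rdiv Rmult_comm scal_sum; apply: sum_Rle => i Hi.
have -> : s i m * INR ((k - i) ^_ r) * T ^ (k - i - r) -
   alpha i * INR ((k - i) ^_ r) * T ^ (k - i - r) =
   (s i m - alpha i) * (INR ((k - i) ^_ r) * T ^ (k - i - r)) by ring.
rewrite Rabs_mult Rabs_mult (Rabs_right (INR _)); last by apply/Rle_ge/pos_INR.
have H1 := Hs i (introT leP Hi).
have H2 : Rabs (T ^ (k - i - r)) <= Bt ^ (k - i - r).
  rewrite -RPow_abs; apply: pow_incr; split => //; exact: Rabs_pos.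
have H3 := pos_INR ((k - i) ^_ r).
have H4 := Rabs_pos (T ^ (k - i - r)).
have H5 := Rabs_pos (s i m - alpha i).
rewrite /Rdiv Rmult_1_l in H1.
have H6 : 0 <= / (INR m + 1) by apply/Rlt_le/Rinv_0_lt_compat; have := pos_INR m; lra.
have : Rabs (s i m - alpha i) * (INR ((k - i) ^_ r) * Rabs (T ^ (k - i - r))) <=
       / (INR m + 1) * (INR ((k - i) ^_ r) * Bt ^ (k - i - r)).
  apply: Rmult_le_compat => //; first by apply: Rmult_le_pos.
  by apply: Rmult_le_compat_l.
lra.
Qed.

Lemma F1_app1 (F : FunClass) f : F 1%nat f -> F1 F (app1 f).
Proof.
move=> Hf; rewrite /F1 /app1.
have -> : (fun v : 'I_1 -> nat => f (fun _ => v ord0)) = f => //.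
apply: functional_extensionality => v; congr f.
by apply: functional_extensionality => i; rewrite (ord1 i).
Qed.

Lemma int_nat (z : Z) : exists P1 P2 : nat, IZR z = INR P1 - INR P2.
Proof.
case: (Z.le_gt_cases 0 z) => Hz.
  have [m ->] := IZN z Hz; exists m, 0%nat; rewrite -INR_IZR_INZ /=; ring.
have Hz' : (0 <= - z)%Z by lia.
have [m Hm] := IZN (- z) Hz'; exists 0%nat, m.
have -> : z = (- Z.of_nat m)%Z by lia.
rewrite opp_IZR -INR_IZR_INZ /=; ring.
Qed.

Lemma frac_le a b e f : 0 < b -> 0 < f -> a * f <= e * b -> a / b <= e / f.
Proof.
move=> Hb Hf H.
have Hp : 0 <= / b * / f.
  by apply: Rmult_le_pos; apply/Rlt_le/Rinv_0_lt_compat.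
have := Rmult_le_compat_r _ _ _ Hp H.
have -> : a * f * (/ b * / f) = a / b by field; lra.
have -> : e * b * (/ b * / f) = e / f by field; lra.
done.
Qed.


Unset Implicit Arguments.
Set Strict Implicit.

Theorem mainTheorem13 (F : FunClass)
  (HF : standard_conditions F) (HM : closed_under_minimizer F)
  (k : nat) (alpha : nat -> R)
  (H0 : alpha 0%nat <> 0%R)
  (Hc : forall i : nat, (i <= k)%nat -> F_computable F (alpha i))
  (x : R) (Hroot : sum_f_R0 (fun i => (alpha i * x ^ (k - i))%R) k = 0%R) :
  F_computable F x.
Proof.
have [r [sg [c [dl [S [Hsg [Hc0 [Hdl HS]]]]]]]] := root_sep H0 Hroot.
have Hs : forall i, exists s : nat -> R, (i <= k)%nat ->
   F1seq F s /\ forall m, Rabs (s m - alpha i) <= 1 / (INR m + 1).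
  move=> i; case: (leqP i k) => Hi.
    have [f [g [h [Hf Hg Hh Happ]]]] := Hc i Hi.
    exists (Fseq f g h) => _; split; last exact: Happ.
    by exists (app1 f), (app1 g), (app1 h); split; try exact: F1_app1.
  by exists (fun _ => 0) => H; exfalso; lia.
pose s i := proj1_sig (constructive_indefinite_description _ (Hs i)).
have Hsi : forall i, (i <= k)%nat -> F1seq F (s i) /\
    forall m, Rabs (s i m - alpha i) <= 1 / (INR m + 1).
  by move=> i; exact: (proj2_sig (constructive_indefinite_description _ (Hs i))).
set Bt := Rabs x + 1.
set Cst := sum_f_R0 (fun i => INR ((k - i) ^_ r) * Bt ^ (k - i - r)) k.
have HCst : 0 <= Cst.
  apply: cond_pos_sum => i; apply: Rmult_le_pos; first exact: pos_INR.
  by apply: pow_le; rewrite /Bt; have := Rabs_pos x; lra.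
have [K HK] := INR_archimed dl 2 (proj1 Hdl).
have HKr : 1 <= INR K.
  case: K HK => [|K] HK; first by rewrite /= Rmult_0_l in HK; lra.
  by change 1 with (INR 1); apply: le_INR; apply/leP.
have HK1 : (1 <= K)%nat by case: K HK HKr => [|K] //= _; lra.
have [Mc HMc] := INR_archimed c (2 * Cst) Hc0.
have [z [Hz1 Hz2]] : exists z : Z, IZR z <= x * INR K - 1 < IZR z + 1.
  exists (up (x * INR K - 1) - 1)%Z; rewrite minus_IZR.
  change (IZR 1) with 1; have := archimed (x * INR K - 1); lra.
have [P1 [P2 HP]] := int_nat z.
set Ki := / INR K.
have HKi : 0 < Ki by apply: Rinv_0_lt_compat; lra.
have HKKi : INR K * Ki = 1 by rewrite /Ki; field; lra.
set a := (INR P1 - INR P2) * Ki.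
have Ha1 : a <= x - Ki.
  rewrite /a -HP.
  have := Rmult_le_compat_r Ki _ _ (Rlt_le _ _ HKi) Hz1.
  have -> : (x * INR K - 1) * Ki = x - Ki by rewrite Rmult_minus_distr_r Rmult_assoc HKKi; ring.
  done.
have Ha2 : x - 2 * Ki < a.
  rewrite /a -HP.
  have := Rmult_lt_compat_r Ki _ _ HKi (proj2 (conj Hz1 Hz2)).
  have -> : (IZR z + 1) * Ki = IZR z * Ki + Ki by ring.
  have -> : (x * INR K - 1) * Ki = x - Ki by rewrite Rmult_minus_distr_r Rmult_assoc HKKi; ring.
  lra.
have Hdl2 : 2 * Ki <= dl.
  have := Rmult_lt_compat_r Ki _ _ HKi HK.
  have -> : INR K * dl * Ki = dl by rewrite Rmult_comm -Rmult_assoc (Rmult_comm Ki) HKKi; ring.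
  lra.
pose h n := / (INR K * (2 * (INR n + 1))).
have Hh : forall n, 0 < h n.
  move=> n; apply: Rinv_0_lt_compat; have := pos_INR n; nra.
pose t n j := a + INR j * h n.
have Rt : RG2 F t.
  apply: RG2_ext (RG2_add HF (RG2_const P1 P2 (K - 1) HF)
     (RG2_frac (P := fun n j => j) (D := fun n j => 2 * K * n + (2 * K - 1))%nat HF
        (F2_p1 HF) _)) _.
    apply: F2_add => //; last exact: F2_const.
    by apply: F2_mul => //; [exact: F2_const | exact: F2_p0].
  move=> n j; rewrite /t /a /h /Ki -!S_INR.
  have -> : ((K - 1).+1 = K)%nat by lia.
  have -> : ((2 * K * n + (2 * K - 1)).+1 = K * (2 * n.+1))%nat by nia.
  rewrite !mult_INR !S_INR /=; field.
  have := pos_INR n; lra.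
have HM2 : F2 F (fun n j => Mc * (n + 1))%nat.
  apply: F2_mul => //; first exact: F2_const.
  by apply: F2_add => //; [exact: F2_p0 | exact: F2_const].
pose M n := (Mc * (n + 1))%nat.
pose Qt n j := sg * sum_f_R0 (fun i => s i (M n) * INR ((k - i) ^_ r) * t n j ^ (k - i - r)) k.
have Rsg : RG2 F (fun _ _ => sg).
  case: Hsg => ->.
    by apply: RG2_ext (RG2_const 1 0 0 HF) _ => n j /=; field.
  by apply: RG2_ext (RG2_const 0 1 0 HF) _ => n j /=; field.
have Rterm : forall i, (i <= k)%nat ->
    RG2 F (fun n j => s i (M n) * INR ((k - i) ^_ r) * t n j ^ (k - i - r)).
  move=> i Hi.
  apply: (RG2_ext (RG2_mul HF (RG2_mul HF (RG2_seq HF (proj1 (Hsi i Hi)) HM2)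
     (RG2_const ((k - i) ^_ r) 0 0 HF)) (RG2_pow (k - i - r)%nat HF Rt))) => n j /=.
  rewrite /M; field.
have RQ : RG2 F Qt.
  apply: RG2_ext (RG2_mul HF Rsg (RG2_sum HF Rterm)) _ => //.
case: RQ => p [m [d [Hp Hm Hd EQ]]].
pose cond n j := (m n j - p n j)%nat.
pose js n := mu2 cond n (6 * (n + 1))%nat.
have Fjs : F1 F js.
  apply: (F1_bin (h := mu2 cond) HF (F2_mu HM (F2_sub HF Hm Hp)) (F1_id HF)).
  apply: (F1_bin (h := fun n j => (6 * (n + 1))%nat) (f := fun n => n) (g := fun n => n) HF _ (F1_id HF) (F1_id HF)).
  apply: F2_mul => //; first exact: F2_const.
  by apply: F2_add => //; [exact: F2_p0 | exact: F2_const].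
case: Rt => pt [mt [dt [Hpt Hmt Hdt Et]]].
exists (fun v => pt (v ord0) (js (v ord0))), (fun v => mt (v ord0) (js (v ord0))),
       (fun v => dt (v ord0) (js (v ord0))).
split.
- exact: (F1_bin (h := pt) HF Hpt (F1_id HF) Fjs).
- exact: (F1_bin (h := mt) HF Hmt (F1_id HF) Fjs).
- exact: (F1_bin (h := dt) HF Hdt (F1_id HF) Fjs).
move=> n; rewrite /Fseq /app1 -Et.
have HN1 : 0 < INR n + 1 by have := pos_INR n; lra.
set eta := Cst / (INR (M n) + 1).
have HMn : 0 < INR (M n) + 1 by have := pos_INR (M n); lra.
have Heta : 0 <= eta by apply: Rmult_le_pos => //; apply/Rlt_le/Rinv_0_lt_compat.
have H3 : INR (6 * (n + 1)) * h n = 3 * Ki.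
  rewrite /h /Ki mult_INR plus_INR.
  have -> : INR 6 = 6 by rewrite /=; ring.
  rewrite /=; field; lra.
have Hrange : forall j, (j <= 6 * (n + 1))%nat -> 0 <= INR j * h n <= 3 * Ki.
  move=> j Hj; split; first by apply: Rmult_le_pos; [exact: pos_INR | exact: Rlt_le].
  rewrite -H3; apply: Rmult_le_compat_r; first exact: Rlt_le.
  by apply: le_INR; apply/leP.
have Hnear : forall j, (j <= 6 * (n + 1))%nat -> Rabs (a + INR j * h n - x) <= dl.
  by move=> j /Hrange Hj; apply: Rabs_le; lra.
apply: Rle_trans (search_lemma (cond := cond) (n := n) (N := (6 * (n + 1))%nat)
   (Qv := fun j => Qt n j) (Qf := fun t => sg * Qr alpha k r t) (S := S) (eta := eta)
   Hc0 (Hh n) Heta _ _ _ _ _) _.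
- lra.
- rewrite H3; lra.
- move=> j Hj.
  apply: approx_bound => //.
    have := Hnear j Hj; have := Rabs_triang x (a + INR j * h n - x).
    have -> : x + (a + INR j * h n - x) = a + INR j * h n by ring.
    rewrite /t /Bt; have := proj2 Hdl; lra.
  by move=> i Hi; apply: (proj2 (Hsi i Hi)).
- by move=> j Hj; apply: HS; apply: Hnear.
- move=> j; rewrite /cond EQ; have := INR_p1 (d n j) => Hd1.
  split.
    move/eqP; rewrite subn_eq0 => /leP /le_INR Hle.
    apply: Rmult_le_pos; first lra.
    exact/Rlt_le/Rinv_0_lt_compat.
  move=> H; apply/eqP; rewrite subn_eq0; apply/leP; apply: INR_le.
  have := Rmult_le_compat_r (INR (d n j) + 1) _ _ (Rlt_le _ _ Hd1) H.
  have -> : (INR (p n j) - INR (m n j)) / (INR (d n j) + 1) * (INR (d n j) + 1)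
       = INR (p n j) - INR (m n j) by field; lra.
  lra.
have E1 : eta / c <= 1 / (2 * (INR n + 1)).
  rewrite /eta.
  have -> : Cst / (INR (M n) + 1) / c = Cst / ((INR (M n) + 1) * c) by field; lra.
  apply: frac_le; try nra.
  rewrite /M mult_INR plus_INR /=; nra.
have E2 : h n <= 1 / (2 * (INR n + 1)).
  rewrite /h -(Rmult_1_l (/ _)); apply: frac_le; nra.
have -> : 1 / (INR n + 1) = 1 / (2 * (INR n + 1)) + 1 / (2 * (INR n + 1)) by field; lra.
lra.
Qed.
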